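(* There is a polynomial $f$ such that every satisfiable $\mathrm{LTL_{PSL}}$ formula $\varphi$ is satisfied in an $\mathrm{SLTL}$ model $M=(\Pi,\lambda)$ (i.e. $M,\sigma,0\models\varphi$ for some $\sigma\in\Pi$) with $|\Pi|\le f(|\varphi|)$, where $|\varphi|$ is the size of $\varphi$.
   Context: Fix countably infinite sets $\mathcal{P}$ of propositional variables and $\mathcal{S}$ of standpoint symbols containing a universal symbol $*$. SLTL formulae: $\varphi ::= p \mid s \preceq s' \mid \neg\varphi \mid \varphi\wedge\varphi \mid \Diamond_s\varphi \mid \Box_s\varphi \mid X\varphi \mid \varphi\,U\,\varphi$. A model is $M=(\Pi,\lambda)$ with $\Pi\neq\emptyset$ a set of traces $\sigma:\mathbb{N}\to 2^{\mathcal{P}}$ and $\lambda:\mathcal{S}\to 2^{\Pi}\setminus\{\emptyset\}$ with $\lambda( * )=\Pi$. Semantics: $M,\sigma,i\models p$ iff $p\in\sigma(i)$; $M,\sigma,i\models s\preceq s'$ iff $\lambda(s)\subseteq\lambda(s')$; Boolean clauses as usual; $\Diamond_s\psi$ (resp. $\Box_s\psi$) holds at $\sigma,i$ iff $\psi$ holds at $\sigma',i$ for some (resp. all) $\sigma'\in\lambda(s)$; $X\psi$ holds at $\sigma,i$ iff $\psi$ holds at $\sigma,i+1$; $\psi U\chi$ holds at $\sigma,i$ iff $\chi$ holds at $\sigma,i'$ for some $i'\ge i$ and $\psi$ holds at $\sigma,i''$ for all $i\le i''<i'$. $\varphi$ is satisfiable iff $M,\sigma,0\models\varphi$ for some $M=(\Pi,\lambda)$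 and $\sigma\in\Pi$. $\mathrm{LTL_{PSL}}$ is the fragment of SLTL consisting of formulae in which no temporal connective ($X$ or $U$) occurs in the scope of a standpoint modality $\Diamond_s$ or $\Box_s$. *)

(* Defs.v *)
From Stdlib Require List.
From mathcomp Require Import all_boot all_order all_algebra.
Set Implicit Arguments. Unset Strict Implicit. Unset Printing Implicit Defensive.

(* Propositional variables: nat (countably infinite).
   Standpoint symbols: the universal symbol [Univ] (= * ) plus countably many [Sp n]. *)
Inductive standpoint : Type := Univ | Sp (n : nat).

Inductive sltl : Type :=
  | FVar   (p : nat)
  | FSharp (s s' : standpoint)
  | FNeg   (phi : sltl)
  | FAnd   (phi psi : sltl)
  | FDia   (s : standpoint) (phi : sltl)
  | FBox   (s : standpoint) (phi : sltl)
  | FNext  (phi : sltl)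
  | FUntil (phi psi : sltl).

(* A trace sigma : N -> 2^P, represented by its characteristic function. *)
Definition trace := nat -> nat -> bool.

Record model : Type := Model {
  Pi : trace -> Prop;
  lam : standpoint -> trace -> Prop;
  Pi_nonempty : exists sigma, Pi sigma;
  lam_sub : forall s sigma, lam s sigma -> Pi sigma;
  lam_nonempty : forall s, exists sigma, lam s sigma;
  lam_univ : forall sigma, lam Univ sigma <-> Pi sigma
}.

Fixpoint sat (M : model) (sigma : trace) (i : nat) (phi : sltl) : Prop :=
  match phi with
  | FVar p => sigma i p = true
  | FSharp s s' => forall tau, lam M s tau -> lam M s' tau
  | FNeg psi => ~ sat M sigma i psi
  | FAnd psi chi => sat M sigma i psi /\ sat M sigma i chi
  | FDia s psi => exists tau, lam M s tau /\ sat M tau i psi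
  | FBox s psi => forall tau, lam M s tau -> sat M tau i psi
  | FNext psi => sat M sigma i.+1 psi
  | FUntil psi chi =>
      exists i', i <= i' /\ sat M sigma i' chi /\
                 (forall i'', i <= i'' -> i'' < i' -> sat M sigma i'' psi)
  end.

Definition satisfiable (phi : sltl) : Prop :=
  exists (M : model) (sigma : trace), Pi M sigma /\ sat M sigma 0 phi.

Fixpoint fsize (phi : sltl) : nat :=
  match phi with
  | FVar _ | FSharp _ _ => 1
  | FNeg psi | FDia _ psi | FBox _ psi | FNext psi => (fsize psi).+1
  | FAnd psi chi | FUntil psi chi => (fsize psi + fsize chi).+1
  end.

Fixpoint temporal_free (phi : sltl) : bool :=
  match phi with
  | FVar _ | FSharp _ _ => true
  | FNeg psi | FDia _ psi | FBox _ psi => temporal_free psi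
  | FAnd psi chi => temporal_free psi && temporal_free chi
  | FNext _ | FUntil _ _ => false
  end.

Fixpoint ltl_psl (phi : sltl) : bool :=
  match phi with
  | FVar _ | FSharp _ _ => true
  | FNeg psi | FNext psi => ltl_psl psi
  | FAnd psi chi | FUntil psi chi => ltl_psl psi && ltl_psl chi
  | FDia _ psi | FBox _ psi => temporal_free psi
  end.

Definition card_le (Pi : trace -> Prop) (n : nat) : Prop :=
  exists l : seq trace, size l <= n /\ forall sigma, Pi sigma -> List.In sigma l.

(* Main.v *)
Require Import Defs.
From mathcomp Require Import all_boot all_order all_algebra.
From mathcomp Require Import zify.
From Stdlib Require Import ClassicalEpsilon Classical.
Import GRing.Theory Num.Theory.

Fixpoint maxvar (phi : sltl) : nat :=
  match phi with
  | FVar p => p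
  | FSharp _ _ => 0
  | FNeg a | FDia _ a | FBox _ a | FNext a => maxvar a
  | FAnd a b | FUntil a b => maxn (maxvar a) (maxvar b)
  end.

Fixpoint stps (phi : sltl) : seq standpoint :=
  match phi with
  | FVar _ => [::]
  | FSharp s s' => [:: s; s']
  | FNeg a | FNext a => stps a
  | FDia s a | FBox s a => s :: stps a
  | FAnd a b | FUntil a b => stps a ++ stps b
  end.

Fixpoint mods (phi : sltl) : seq (bool * standpoint * sltl) :=
  match phi with
  | FVar _ | FSharp _ _ => [::]
  | FNeg a | FNext a => mods a
  | FDia s a => (true, s, a) :: mods a
  | FBox s a => (false, s, a) :: mods a
  | FAnd a b | FUntil a b => mods a ++ mods b
  end.

Lemma size_stps phi : size (stps phi) <= 2 * fsize phi.
Proof. elim: phi => //= *; rewrite ?size_cat; lia. Qed.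

Lemma size_mods phi : size (mods phi) <= fsize phi.
Proof. elim: phi => //= *; rewrite ?size_cat; lia. Qed.

Lemma In_cat {T} (x : T) s1 s2 : List.In x (s1 ++ s2) <-> List.In x s1 \/ List.In x s2.
Proof. elim: s1 => [|a s IH] /=; [tauto| rewrite IH; tauto]. Qed.

Lemma In_nth_ex {T} (x0 x : T) s : List.In x s -> exists j, j < size s /\ nth x0 s j = x.
Proof.
  elim: s => [|a s IH] //= [->|/IH [j [hj e]]]; first by exists 0.
  by exists j.+1.
Qed.

Lemma nth_all {T} (P : T -> Prop) x0 s k : k < size s -> (forall x, List.In x s -> P x) -> P (nth x0 s k).
Proof.
  elim: s k => [|a s IH] [|k] //= hk H.
    by apply: H; left.
  by apply: IH => // x hx; apply: H; right.
Qed.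

Lemma In_map_iota {T} (f : nat -> T) n m k : m <= k < m + n -> List.In (f k) [seq f j | j <- iota m n].
Proof.
  elim: n m => [|n IH] m /=; first lia.
  move=> hk; case: (eqVneq k m) => [->|ne]; first by left.
  right; apply: IH; lia.
Qed.

Definition inhT : inhabited trace := inhabits (fun _ _ => false).

Definition witness (M : model) t (Q : trace -> Prop) : trace :=
  epsilon inhT (fun o => lam M t o /\ (Q o \/ ~ exists w, lam M t w /\ Q w)).

Lemma witness_spec M t Q : lam M t (witness M t Q) /\
  ((exists w, lam M t w /\ Q w) -> Q (witness M t Q)).
Proof.
  have : exists o, lam M t o /\ (Q o \/ ~ exists w, lam M t w /\ Q w).
    case: (classic (exists w, lam M t w /\ Q w)) => [[w [h1 h2]]|hn].
      by exists w; split; [|left].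
    case: (lam_nonempty M t) => o ho; exists o; split; [|right]; done.
  move/(epsilon_spec inhT) => [h1 h2]; split => // ex.
  case: h2 => // //.
Qed.

Definition modsrc M (b : bool) t psi : nat -> trace :=
  fun i => witness M t (fun o => if b then sat M o i psi else ~ sat M o i psi).

Definition specs M (sigma : trace) phi : seq (standpoint * (nat -> trace)) :=
  (Univ, fun _ => sigma) ::
  ([seq (u, fun _ : nat => witness M u (fun _ => True)) | u <- Univ :: stps phi] ++
   [seq (m.1.2, modsrc M m.1.1 m.1.2 m.2) | m <- mods phi]).

Definition sp0 (sigma : trace) : standpoint * (nat -> trace) := (Univ, fun _ => sigma).

Definition mk M sigma phi k : trace := fun i p =>
  if p < (maxvar phi).+1 then snd (nth (sp0 sigma) (specs M sigma phi) k) i i p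
  else p == (maxvar phi).+1 + k.

Definition Pi' M sigma phi (tau : trace) : Prop :=
  exists k, k < size (specs M sigma phi) /\ tau = mk M sigma phi k.

Definition lam' M sigma phi (u : standpoint) (tau : trace) : Prop :=
  (List.In u (Univ :: stps phi) /\ exists k, k < size (specs M sigma phi) /\ tau = mk M sigma phi k /\
     (forall w, lam M (nth (sp0 sigma) (specs M sigma phi) k).1 w -> lam M u w))
  \/ (~ List.In u (Univ :: stps phi) /\ Pi' M sigma phi tau).

Lemma In_map {T U} (f : T -> U) x s : List.In x s -> List.In (f x) (map f s).
Proof. elim: s => [|a s IH] //= [->|h]; [by left|by right; apply: IH]. Qed.

Lemma In_map_inv {T U} (f : T -> U) y s : List.In y (map f s) -> exists x, List.In x s /\ y = f x.
Proof.
  elim: s => [|a s IH] //= [<-|/IH [x [h1 h2]]]; first by exists a; split; [left|].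
  by exists x; split; [right|].
Qed.


Lemma In_cons_inv {T} (x a : T) l : List.In x (a :: l) -> a = x \/ List.In x l.
Proof. by []. Qed.

Lemma specs_lam M sigma phi (hs : Pi M sigma) k : k < size (specs M sigma phi) ->
  forall i, lam M (nth (sp0 sigma) (specs M sigma phi) k).1 ((nth (sp0 sigma) (specs M sigma phi) k).2 i).
Proof.
  move=> hk; apply: (@nth_all _ (fun x => forall i, lam M x.1 (x.2 i)) (sp0 sigma) (specs M sigma phi) k hk) => x.
  rewrite /specs; set l1 := map _ (Univ :: _); set l2 := map _ (mods _).
  move=> hx1; case: (In_cons_inv _ _ _ hx1) => [<- i|hx0]; first by apply/lam_univ.
  case: (proj1 (In_cat _ _ _) hx0) => [hx i|hx i].
    case: (In_map_inv _ _ _ hx) => u [_ ->] /=.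
    by case: (witness_spec M u (fun _ => True)).
  case: (In_map_inv _ _ _ hx) => m [_ ->] /=.
  rewrite /modsrc.
  by case: (witness_spec M m.1.2 (fun o => if m.1.1 then sat M o i m.2 else ~ sat M o i m.2)).
Qed.

Lemma idx_u M sigma phi u : List.In u (Univ :: stps phi) ->
  exists k, k < size (specs M sigma phi) /\ (nth (sp0 sigma) (specs M sigma phi) k).1 = u.
Proof.
  move=> hu.
  have : List.In (u, fun _ : nat => witness M u (fun _ => True)) (specs M sigma phi).
    by right; apply/In_cat; left; apply: (In_map (fun u => (u, fun _ : nat => witness M u (fun _ => True)))).
  by move/(In_nth_ex (sp0 sigma)) => [j [hj e]]; exists j; rewrite e.
Qed.

Lemma idx_m M sigma phi m : List.In m (mods phi) ->
  exists k, k < size (specs M sigma phi) /\ nth (sp0 sigma) (specs M sigma phi) k = (m.1.2, modsrc M m.1.1 m.1.2 m.2).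
Proof.
  move=> hm.
  have : List.In (m.1.2, modsrc M m.1.1 m.1.2 m.2) (specs M sigma phi).
    by right; apply/In_cat; right; apply: (In_map (fun m => (m.1.2, modsrc M m.1.1 m.1.2 m.2))).
  by move/(In_nth_ex (sp0 sigma)) => [j [hj e]]; exists j.
Qed.

Lemma mk_inj M sigma phi k k' : mk M sigma phi k = mk M sigma phi k' -> k = k'.
Proof.
  move/(congr1 (fun t => t 0 ((maxvar phi).+1 + k))); rewrite /mk.
  have -> : ((maxvar phi).+1 + k < (maxvar phi).+1) = false by lia.
  rewrite eqxx => /esym/eqP; lia.
Qed.

Lemma mk_agree M sigma phi k i p : p < (maxvar phi).+1 ->
  mk M sigma phi k i p = (nth (sp0 sigma) (specs M sigma phi) k).2 i i p.
Proof. by rewrite /mk => ->. Qed.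

Lemma Pi'_ne M sigma phi : exists tau, Pi' M sigma phi tau.
Proof. by exists (mk M sigma phi 0), 0. Qed.

Lemma lam'_sub M sigma phi u tau : lam' M sigma phi u tau -> Pi' M sigma phi tau.
Proof. by case=> [[_ [k [hk [-> _]]]]|[_ h]] //; exists k. Qed.

Lemma lam'_ne M sigma phi u : exists tau, lam' M sigma phi u tau.
Proof.
  case: (classic (List.In u (Univ :: stps phi))) => hu.
    case: (@idx_u M sigma phi u hu) => k [hk e]; exists (mk M sigma phi k); left; split => //.
    by exists k; rewrite e.
  by case: (Pi'_ne M sigma phi) => tau h; exists tau; right.
Qed.

Lemma lam'_univ M sigma phi tau : lam' M sigma phi Univ tau <-> Pi' M sigma phi tau.
Proof.
  split; first exact: lam'_sub.
  move=> [k [hk ->]]; left; split; first by left.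
  exists k; split; [done|split; [done|]].
  by move=> w /lam_sub /lam_univ.
Qed.

Definition M' M sigma phi : model :=
  Model (Pi'_ne M sigma phi) (@lam'_sub M sigma phi) (lam'_ne M sigma phi) (@lam'_univ M sigma phi).

Lemma lam'_mem M sigma phi u k : List.In u (Univ :: stps phi) -> lam' M sigma phi u (mk M sigma phi k) ->
  forall w, lam M (nth (sp0 sigma) (specs M sigma phi) k).1 w -> lam M u w.
Proof.
  move=> hu [[_ [k' [hk' [/mk_inj -> h]]]]|[hn _]] //.
Qed.

Lemma lam'_base M sigma phi u k : k < size (specs M sigma phi) -> List.In u (Univ :: stps phi) ->
  (forall w, lam M (nth (sp0 sigma) (specs M sigma phi) k).1 w -> lam M u w) ->
  lam' M sigma phi u (mk M sigma phi k).
Proof. by move=> hk hu h; left; split => //; exists k. Qed.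

Lemma sharp_ok M sigma phi s s' : List.In s (Univ :: stps phi) -> List.In s' (Univ :: stps phi) ->
  ((forall tau, lam' M sigma phi s tau -> lam' M sigma phi s' tau) <-> (forall w, lam M s w -> lam M s' w)).
Proof.
  move=> hs hs'; split.
    case: (@idx_u M sigma phi s hs) => k [hk e] H.
    have hb : lam' M sigma phi s (mk M sigma phi k).
      by apply: lam'_base => // w; rewrite e.
    have := @lam'_mem M sigma phi s' k hs' (H _ hb).
    by rewrite e.
  move=> H tau [[_ [k [hk [-> h]]]]|[hn _]] //.
  by apply: lam'_base => // w /h /H.
Qed.

Lemma tf_ok M sigma phi (hs : Pi M sigma) psi : temporal_free psi -> maxvar psi < (maxvar phi).+1 ->
  (forall x, List.In x (stps psi) -> List.In x (Univ :: stps phi)) ->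
  (forall m, List.In m (mods psi) -> List.In m (mods phi)) ->
  forall i tau o, (forall p, p < (maxvar phi).+1 -> tau i p = o i p) ->
  (sat (M' M sigma phi) tau i psi <-> sat M o i psi).
Proof.
  elim: psi => [p|s s'|a IHa|a IHa b IHb|t a IHa|t a IHa|a _|a _ b _] //= htf hv hst hmo i tau o hag.
  - by rewrite hag.
  - by apply: sharp_ok; apply: hst; [left|right; left].
  - have := IHa htf hv hst hmo i tau o hag; tauto.
  - move/andP: htf => [ha hb].
    have := IHa ha ltac:(lia) (fun x h => hst x (proj2 (In_cat _ _ _) (or_introl h)))
      (fun x h => hmo x (proj2 (In_cat _ _ _) (or_introl h))) i tau o hag.
    have := IHb hb ltac:(lia) (fun x h => hst x (proj2 (In_cat _ _ _) (or_intror h)))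
      (fun x h => hmo x (proj2 (In_cat _ _ _) (or_intror h))) i tau o hag.
    tauto.
  - have hL : List.In t (Univ :: stps phi) by apply: hst; left.
    have hm : List.In (true, t, a) (mods phi) by apply: hmo; left.
    have IH := IHa htf hv (fun x h => hst x (or_intror h)) (fun m h => hmo m (or_intror h)).
    split.
    + case=> tau' [hl hsat]; move: hsat.
      case: hl => [[_ [k [hk [-> hb]]]]|[hn _]] hsat; last by [].
      exists ((nth (sp0 sigma) (specs M sigma phi) k).2 i); split.
        by apply: hb; apply: specs_lam.
      by apply: (proj1 (IH i _ _ (fun p hp => @mk_agree M sigma phi k i p hp))).
    + case=> o' [hl hsat].
      case: (@idx_m M sigma phi _ hm) => k [hk e].
      exists (mk M sigma phi k); split.
        by apply: lam'_base => //; rewrite e.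
      apply: (proj2 (IH i _ _ (fun p hp => @mk_agree M sigma phi k i p hp))).
      rewrite e /= /modsrc /=.
      case: (witness_spec M t (fun o => sat M o i a)) => _; apply.
      by exists o'.
  - have hL : List.In t (Univ :: stps phi) by apply: hst; left.
    have hm : List.In (false, t, a) (mods phi) by apply: hmo; left.
    have IH := IHa htf hv (fun x h => hst x (or_intror h)) (fun m h => hmo m (or_intror h)).
    split.
    + move=> H o' hl; apply: NNPP => hn.
      case: (@idx_m M sigma phi _ hm) => k [hk e].
      have hb : lam' M sigma phi t (mk M sigma phi k) by apply: lam'_base => //; rewrite e.
      have := proj1 (IH i _ _ (fun p hp => @mk_agree M sigma phi k i p hp)) (H _ hb).
      rewrite e /= /modsrc /=.
      case: (witness_spec M t (fun o => ~ sat M o i a)) => _ W; apply: W.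
      by exists o'.
    + move=> H tau' hl.
      case: hl => [[_ [k [hk [-> hb]]]]|[hn _]]; last by [].
      apply: (proj2 (IH i _ _ (fun p hp => @mk_agree M sigma phi k i p hp))).
      by apply: H; apply: hb; apply: specs_lam.
Qed.

Lemma lp_ok M sigma phi (hs : Pi M sigma) psi : ltl_psl psi -> maxvar psi < (maxvar phi).+1 ->
  (forall x, List.In x (stps psi) -> List.In x (Univ :: stps phi)) ->
  (forall m, List.In m (mods psi) -> List.In m (mods phi)) ->
  forall i, (sat (M' M sigma phi) (mk M sigma phi 0) i psi <-> sat M sigma i psi).
Proof.
  have hag : forall i p, p < (maxvar phi).+1 -> mk M sigma phi 0 i p = sigma i p.
    by move=> i p hp; rewrite mk_agree.
  elim: psi => [p|s s'|a IHa|a IHa b IHb|t a _|t a _|a IHa|a IHa b IHb] /= hl hv hst hmo i.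
  - by rewrite hag.
  - by apply: sharp_ok; apply: hst; [left|right; left].
  - have := IHa hl hv hst hmo i; tauto.
  - move/andP: hl => [ha hb].
    have := IHa ha ltac:(lia) (fun x h => hst x (proj2 (In_cat _ _ _) (or_introl h)))
      (fun x h => hmo x (proj2 (In_cat _ _ _) (or_introl h))) i.
    have := IHb hb ltac:(lia) (fun x h => hst x (proj2 (In_cat _ _ _) (or_intror h)))
      (fun x h => hmo x (proj2 (In_cat _ _ _) (or_intror h))) i.
    tauto.
  - exact: (@tf_ok M sigma phi hs (FDia t a) hl hv hst hmo i _ _ (hag i)).
  - exact: (@tf_ok M sigma phi hs (FBox t a) hl hv hst hmo i _ _ (hag i)).
  - exact: IHa.
  - move/andP: hl => [ha hb].
    have IA := IHa ha ltac:(lia) (fun x h => hst x (proj2 (In_cat _ _ _) (or_introl h)))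
      (fun x h => hmo x (proj2 (In_cat _ _ _) (or_introl h))).
    have IB := IHb hb ltac:(lia) (fun x h => hst x (proj2 (In_cat _ _ _) (or_intror h)))
      (fun x h => hmo x (proj2 (In_cat _ _ _) (or_intror h))).
    split; case=> i' [h1 [h2 h3]]; exists i'; split => //.
      split; first by apply/IB.
      by move=> i'' a1 a2; apply/IA; apply: h3.
    split; first by apply/IB.
    by move=> i'' a1 a2; apply/IA; apply: h3.
Qed.

Local Open Scope ring_scope.

Theorem corollary3 :
  exists f : {poly int},
    forall phi : sltl, ltl_psl phi -> satisfiable phi ->
      exists (M : model) (sigma : trace) (n : nat),
        Pi M sigma /\ sat M sigma 0 phi /\ card_le (Pi M) n /\
        (n%:Z <= f.[(fsize phi)%:Z]).
Proof.
  exists (3%:P * 'X + 2%:P).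
  move=> phi hlp [M [sigma [hs hsat]]].
  exists (M' M sigma phi), (mk M sigma phi 0), (size (specs M sigma phi)).
  split; first by exists 0%N.
  split.
    apply/(@lp_ok M sigma phi hs phi hlp (leqnn _) (fun x h => or_intror h) (fun m h => h)).
    exact: hsat.
  split.
    exists [seq mk M sigma phi k | k <- iota 0 (size (specs M sigma phi))]; split.
      by rewrite size_map size_iota.
    move=> tau [k [hk ->]]; apply: In_map_iota; lia.
  have h1 := size_stps phi; have h2 := size_mods phi.
  have hn : (size (specs M sigma phi) <= 3 * fsize phi + 2)%N.
    rewrite /specs /= size_cat !size_map /=; lia.
  rewrite hornerD hornerMX !hornerC.
  have -> : 3 * (fsize phi)%:Z + 2 = ((3 * fsize phi + 2)%N)%:Z by rewrite PoszD PoszM.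
  by rewrite lez_nat.
Qed.
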